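(* Let $n\ge 1$, let $x_0<x_1<\dots<x_n$ be real numbers and let $\hat x_0<\hat x_1<\dots<\hat x_n$ be real numbers with $\hat x_0=x_0$ and $\hat x_n=x_n$. Fix $k\in\{0,\dots,n\}$. If $\xi:=\sum_{j\neq k}|r_{jk}(\mathbf{x},\hat{\mathbf{x}})|<1$, then \[ -\frac{\xi^2}{(1-\xi)^3}\Bigl(1+\tfrac14\xi^2\Bigr)\ \le\ z_k(\mathbf{x},\hat{\mathbf{x}})-\sum_{j\neq k} r_{jk}(\mathbf{x},\hat{\mathbf{x}})\ \le\ \frac{\xi^2}{1-\xi}. \]
   Context: For distinct nodes $\mathbf{x}=(x_0,\dots,x_n)$ the barycentric weights are $\lambda_k(\mathbf{x}):=1/\prod_{j\neq k}(x_k-x_j)$. For two node vectors $\mathbf{x},\hat{\mathbf{x}}$ define the relative weight errors $z_k(\mathbf{x},\hat{\mathbf{x}}):=\dfrac{\lambda_k(\mathbf{x})-\lambda_k(\hat{\mathbf{x}})}{\lambda_k(\hat{\mathbf{x}})}$ and the relative errors in node differences $r_{jk}(\mathbf{x},\hat{\mathbf{x}}):=\dfrac{\hat x_k-\hat x_j}{x_k-x_j}-1$ for $j\neq k$. *)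

(* Defs.v *)
From mathcomp Require Import all_boot all_order all_algebra.
Set Implicit Arguments. Unset Strict Implicit. Unset Printing Implicit Defensive.
Import Order.TTheory GRing.Theory Num.Theory.
Local Open Scope ring_scope.

Definition bary_weight (R : fieldType) (n : nat) (x : 'I_n.+1 -> R) (k : 'I_n.+1) : R :=
  (\prod_(j < n.+1 | j != k) (x k - x j))^-1.

Definition weight_err (R : fieldType) (n : nat) (x xh : 'I_n.+1 -> R) (k : 'I_n.+1) : R :=
  (bary_weight x k - bary_weight xh k) / bary_weight xh k.

Definition diff_err (R : fieldType) (n : nat) (x xh : 'I_n.+1 -> R) (j k : 'I_n.+1) : R :=
  (xh k - xh j) / (x k - x j) - 1.

(* Main.v *)
Require Import Defs.
From mathcomp Require Import all_boot all_order all_algebra.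
From mathcomp Require Import ring lra.
Import Order.TTheory GRing.Theory Num.Theory.
Local Open Scope ring_scope.

Lemma gen (R : realFieldType) (I : Type) (s : seq I) (f : I -> R) :
  `|\prod_(i <- s) (1 + f i) - 1| <= \prod_(i <- s) (1 + `|f i|) - 1 /\
  `|\prod_(i <- s) (1 + f i) - 1 - \sum_(i <- s) f i|
     <= \prod_(i <- s) (1 + `|f i|) - 1 - \sum_(i <- s) `|f i| /\
  (\sum_(i <- s) `|f i| <= 1 ->
     \prod_(i <- s) (1 + `|f i|) * (1 - \sum_(i <- s) `|f i|) <= 1).
Proof.
elim: s => [|i s [IH1 [IH2 IH3]]].
  rewrite !big_nil /= !subrr ?sub0r ?normrN normr0 ?subr0 ?mulr1.
  split; first by []. split; last by []. lra.
rewrite !big_cons.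
set P := \prod_(j <- s) (1 + f j) in IH1 IH2 IH3 *.
set Q := \prod_(j <- s) (1 + `|f j|) in IH1 IH2 IH3 *.
set T := \sum_(j <- s) f j in IH1 IH2 IH3 *.
set A := \sum_(j <- s) `|f j| in IH1 IH2 IH3 *.
set a := f i.
have ha : 0 <= `|a| by [].
have hP : `|P| <= Q.
  have -> : P = (P - 1) + 1 by ring.
  apply: (le_trans (ler_normD _ _)); rewrite normr1; lra.
have hQ : 1 <= Q by have := normr_ge0 (P - 1); lra.
have haP : `|a * P| <= `|a| * Q by rewrite normrM ler_wpM2l.
have haP1 : `|a * (P - 1)| <= `|a| * (Q - 1) by rewrite normrM ler_wpM2l.
split.
  have -> : (1 + a) * P - 1 = (P - 1) + a * P by ring.
  apply: (le_trans (ler_normD _ _)).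
  have -> : (1 + `|a|) * Q - 1 = (Q - 1) + `|a| * Q by ring.
  lra.
split.
  have -> : (1 + a) * P - 1 - (a + T) = (P - 1 - T) + a * (P - 1) by ring.
  apply: (le_trans (ler_normD _ _)).
  have -> : (1 + `|a|) * Q - 1 - (`|a| + A) = (Q - 1 - A) + `|a| * (Q - 1) by ring.
  lra.
move=> hA.
have hA' : A <= 1 by lra.
have := IH3 hA'.
nra.
Qed.

Theorem lemma1 (R : realFieldType) (n : nat) (x xh : 'I_n.+1 -> R) (k : 'I_n.+1) :
  (1 <= n)%N ->
  (forall i j : 'I_n.+1, (i < j)%N -> x i < x j) ->
  (forall i j : 'I_n.+1, (i < j)%N -> xh i < xh j) ->
  xh ord0 = x ord0 ->
  xh ord_max = x ord_max ->
  let xi := \sum_(j < n.+1 | j != k) `|diff_err x xh j k| in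
  xi < 1 ->
  - (xi ^+ 2 / (1 - xi) ^+ 3) * (1 + xi ^+ 2 / 4)
    <= weight_err x xh k - \sum_(j < n.+1 | j != k) diff_err x xh j k
  /\ weight_err x xh k - \sum_(j < n.+1 | j != k) diff_err x xh j k
    <= xi ^+ 2 / (1 - xi).
Proof.
move=> _ hx hxh _ _ xi hxi.
have neq (y : 'I_n.+1 -> R) : (forall i j : 'I_n.+1, (i < j)%N -> y i < y j) ->
    forall j, j != k -> y k - y j != 0.
  move=> hy j hj; rewrite subr_eq0.
  case: (ltngtP j k) => h.
  - by rewrite gt_eqF // hy.
  - by rewrite lt_eqF // hy.
  - by move: hj; rewrite (val_inj h) eqxx.
have hw : weight_err x xh k = \prod_(j < n.+1 | j != k) (1 + diff_err x xh j k) - 1.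
  rewrite /weight_err /bary_weight.
  have Dx : \prod_(j < n.+1 | j != k) (x k - x j) != 0 by apply/prodf_neq0; exact: neq.
  have Dh : \prod_(j < n.+1 | j != k) (xh k - xh j) != 0 by apply/prodf_neq0; exact: neq.
  have -> : \prod_(j < n.+1 | j != k) (1 + diff_err x xh j k) =
     \prod_(j < n.+1 | j != k) (xh k - xh j) / \prod_(j < n.+1 | j != k) (x k - x j).
    rewrite -prodfV -big_split /=; apply: eq_bigr => j _; rewrite /diff_err; ring.
  field; apply/andP; split => //.
have := @gen R _ [seq j <- index_enum 'I_n.+1 | j != k] (fun j => diff_err x xh j k).
rewrite !big_filter -/xi -hw.
set Q := \prod_(j <- index_enum 'I_n.+1 | j != k) (1 + `|diff_err x xh j k|).
set W := weight_err x xh k - \sum_(j < n.+1 | j != k) diff_err x xh j k.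
move=> [_ [h2 h3]].
have hxi0 : 0 <= xi by apply: sumr_ge0.
have h3' := h3 (ltW hxi).
have hpos : 0 < 1 - xi by lra.
have hb : W - 0 <= xi ^+ 2 / (1 - xi).
  rewrite subr0 ler_pdivlMr //.
  have /ler_normlP [h4 h5] := h2.
  nra.
set u := (1 - xi)^-1.
have hu : 1 <= u by rewrite /u invf_ge1 //; lra.
have E1 : xi ^+ 2 / (1 - xi) = xi ^+ 2 * u by [].
have E3 : xi ^+ 2 / (1 - xi) ^+ 3 = xi ^+ 2 * u ^+ 3 by rewrite /u exprVn.
have /ler_normlP [h4 h5] := h2.
rewrite subr0 in hb.
rewrite E3; split; last by [].
have hW : - W <= xi ^+ 2 * u.
  rewrite -E1 ler_pdivlMr //; nra.
have hx2 : 0 <= xi ^+ 2 by apply: sqr_ge0.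
have : xi ^+ 2 * u <= xi ^+ 2 * u ^+ 3 * (1 + xi ^+ 2 / 4).
  have hu3 : u <= u ^+ 3 * (1 + xi ^+ 2 / 4).
    have : 0 <= xi ^+ 2 / 4 by apply: divr_ge0.
    rewrite !exprS expr0 mulr1; nra.
  rewrite -mulrA; apply: ler_wpM2l => //.
lra.
Qed.
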